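(* Let $n\ge 2$. There is no finite subset $Y\subseteq\mathbb{S}^{n-1}$ which is a spherical design of harmonic index $\{8,2\}$ and has \[|Y|=\frac{n(n+6)(n+5)(n^2+15n+8)^2}{168(n^3+27n^2+356n-240)},\] i.e. there exists no tight spherical design of harmonic index $\{8,2\}$ on $\mathbb{S}^{n-1}$.
   Context: $\mathbb{S}^{n-1}$ is the unit sphere in $\mathbb{R}^n$. For $T\subseteq\mathbb{N}$, a finite $Y\subseteq\mathbb{S}^{n-1}$ is a spherical design of harmonic index $T$ if $\sum_{\mathbf{x}\in Y}f(\mathbf{x})=0$ for every real homogeneous harmonic polynomial $f$ in $n$ variables whose degree lies in $T$. With Gegenbauer polynomials $Q_{n,k}$ (orthogonal on $[-1,1]$ for the weight $(1-x^2)^{(n-3)/2}$, $Q_{n,k}(1)=\binom{n+k-1}{n-1}-\binom{n+k-3}{n-1}$), the polynomial $Q_{n,8}(x)+f_2Q_{n,2}(x)$ with $f_2=\frac{(n-2)(n+4)(n+5)(n+6)(n+14)}{90(n+12)^2}$ equals $a(x^2-\alpha^2)^2(x^2-\beta^2)^2-c_{n,T}$ with $a>0$, $\alpha^2,\beta^2=\frac{7}{n+12}\pm\frac{\sqrt{42(n+5)(n+10)}}{(n+10)(n+12)}$, $c_{n,T}=\frac{(n+2)(n+4)(n+5)(n+8)(n+14)(n^3+27n^2+356n-240)}{240(n+10)(n+12)^3}$, giving the lower bound $|Y|\ge b_{n,T}$ equal to the displayed cardinality for designs of harmonic index $\{8,2\}$; a design attaining it is called tight. *)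

(* Defs.v *)
From HB Require Import structures.
From mathcomp Require Import all_boot all_order all_algebra.
From mathcomp Require Import reals.
From mathcomp Require Import mpoly.
Set Implicit Arguments. Unset Strict Implicit. Unset Printing Implicit Defensive.
Import Order.TTheory GRing.Theory Num.Theory.
Local Open Scope ring_scope.

Definition on_sphere (R : realType) (n : nat) (x : 'rV[R]_n) : bool :=
  \sum_(i < n) x ord0 i ^+ 2 == 1.

Definition laplacian (R : realType) (n : nat) (p : {mpoly R[n]}) : {mpoly R[n]} :=
  \sum_(i < n) mderiv i (mderiv i p).

Definition harmonic (R : realType) (n : nat) (p : {mpoly R[n]}) : bool :=
  laplacian p == 0.

Definition peval (R : realType) (n : nat) (p : {mpoly R[n]}) (x : 'rV[R]_n) : R :=
  p.@[fun i => x ord0 i].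

(* Y (a finite set, given as a duplicate-free list of points of S^{n-1}) is a
   spherical design of harmonic index T (T a predicate on degrees). *)
Definition harmonic_index_design (R : realType) (n : nat) (T : pred nat)
  (Y : seq 'rV[R]_n) : Prop :=
  forall (k : nat) (f : {mpoly R[n]}), T k -> f \is k.-homog -> harmonic f ->
    \sum_(x <- Y) peval f x = 0.

(* Main.v *)
Require Import Defs.
From HB Require Import structures.
From mathcomp Require Import all_boot all_order all_algebra.
From mathcomp Require Import reals.
From mathcomp Require Import mpoly.
From mathcomp Require Import ring lra zify.
Set Implicit Arguments. Unset Strict Implicit. Unset Printing Implicit Defensive.
Import Order.TTheory GRing.Theory Num.Theory.
Local Open Scope ring_scope.
Section Zonal.
Variable R : realType.
Variable n : nat.
Variable y : 'rV[R]_n.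
Hypothesis hy : \sum_(i < n) y ord0 i ^+ 2 = 1.

Local Notation MP := {mpoly R[n]}.
Definition uu : MP := \sum_(i < n) (y ord0 i)%:MP * 'X_i.
Definition ss : MP := \sum_(i < n) 'X_i ^+ 2.

Lemma dXX (i j : 'I_n) : mderiv i ('X_j : MP) = (j == i)%:R.
Proof.
rewrite mderivX mnm1E; case: eqP => [->|_]; last by rewrite scale0r.
by rewrite -{1}[U_(i)%MM]add0m addmK mpolyX0 scale1r.
Qed.

Lemma d_uu i : mderiv i uu = (y ord0 i)%:MP.
Proof.
rewrite /uu raddf_sum (bigD1 i) //= big1 ?addr0.
  by rewrite mderiv_mulC dXX eqxx mulr1.
by move=> j /negbTE hj; rewrite mderiv_mulC dXX hj mulr0.
Qed.

Lemma d_ss i : mderiv i ss = 'X_i *+ 2.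
Proof.
rewrite /ss raddf_sum (bigD1 i) //= big1 ?addr0.
  by rewrite expr2 mderivM dXX eqxx mulr1 mul1r mulr2n.
by move=> j /negbTE hj; rewrite expr2 mderivM dXX hj mulr0 mul0r addr0.
Qed.

Definition nc (k : nat) : MP := k%:R.
Lemma mulrn_nc (x : MP) k : x *+ k = x * nc k.
Proof. by rewrite /nc mulr_natr. Qed.
Lemma ncD a b : nc (a + b) = nc a + nc b. Proof. by rewrite /nc natrD. Qed.
Lemma ncM a b : nc (a * b) = nc a * nc b. Proof. by rewrite /nc natrM. Qed.
Lemma ncS a : nc a.+1 = nc a + 1. Proof. by rewrite /nc -natr1. Qed.
Lemma nc0 : nc 0 = 0. Proof. by []. Qed.

Lemma d_pow (p : MP) k i : mderiv i (p ^+ k.+1) = (p ^+ k * mderiv i p) *+ k.+1.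
Proof.
elim: k => [|k IH]; first by rewrite expr0 mul1r expr1.
rewrite exprS mderivM IH !mulrn_nc (ncS k.+1).
rewrite exprS; move: (nc k.+1) (p ^+ k) => c P; ring.
Qed.


Lemma lapE (p : MP) : laplacian p = \sum_(i < n) mderiv i (mderiv i p).
Proof. by []. Qed.

Lemma lapD (p q : MP) : laplacian (p + q) = laplacian p + laplacian q.
Proof. by rewrite /laplacian -big_split; apply: eq_bigr => i _; rewrite !mderivD. Qed.

Lemma lapC (c : R) (p : MP) : laplacian (c%:MP * p) = c%:MP * laplacian p.
Proof. by rewrite /laplacian mulr_sumr; apply: eq_bigr => i _; rewrite !mderiv_mulC. Qed.

Lemma lapM (p q : MP) : laplacian (p * q) =
  laplacian p * q + p * laplacian q + (\sum_(i < n) mderiv i p * mderiv i q) *+ 2.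
Proof.
rewrite /laplacian mulr_suml mulr_sumr -sumrMnl -!big_split /=.
apply: eq_bigr => i _; rewrite !mderivM !mderivD !mderivM.
move: (mderiv i p) (mderiv i q) (mderiv i (mderiv i p)) (mderiv i (mderiv i q)) => a b c d.
rewrite mulr2n; ring.
Qed.

Lemma syy : \sum_(i < n) (y ord0 i)%:MP * (y ord0 i)%:MP = 1 :> MP.
Proof.
rewrite -mpolyC1 -hy rmorph_sum; apply: eq_bigr => i _; by rewrite -rmorphM expr2.
Qed.

Lemma lap_u1 : laplacian uu = 0.
Proof. by rewrite /laplacian big1 // => i _; rewrite d_uu mderivC. Qed.

Lemma lap_u (a : nat) : laplacian (uu ^+ a.+2) = uu ^+ a *+ (a.+2 * a.+1).
Proof.
rewrite /laplacian.
under eq_bigr => i _ do rewrite d_pow mderivMn mderivM d_pow !d_uu mderivC mulr0 addr0.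
have E : forall i : 'I_n, ((uu ^+ a * (y ord0 i)%:MP) *+ a.+1 * (y ord0 i)%:MP) *+ a.+2
   = uu ^+ a * ((y ord0 i)%:MP * (y ord0 i)%:MP) *+ (a.+2 * a.+1).
  move=> i; rewrite !mulrn_nc ncM.
  move: (nc a.+1) (nc a.+2) (uu ^+ a) ((y ord0 i)%:MP) => c d P Y; ring.
under eq_bigr => i _ do rewrite E.
by rewrite sumrMnl -mulr_sumr syy mulr1.
Qed.
Lemma syX : \sum_(i < n) (y ord0 i)%:MP * 'X_i = uu.
Proof. by []. Qed.

Lemma sXX : \sum_(i < n) 'X_i * 'X_i = ss :> MP.
Proof. by apply: eq_bigr => i _; rewrite expr2. Qed.

Lemma dXXi i : mderiv i ('X_i : MP) = 1.
Proof. by rewrite dXX eqxx. Qed.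

Lemma sum_cst (C : MP) : \sum_(i < n) C = C * nc n.
Proof. by rewrite sumr_const card_ord mulrn_nc. Qed.

Ltac ncsimp := rewrite ?(ncM, ncD, ncS, nc0).

Lemma lap_s (b : nat) : laplacian (ss ^+ b.+1) = ss ^+ b *+ (b.+1 * (4 * b + 2 * n)).
Proof.
rewrite /laplacian.
under eq_bigr => i _ do rewrite d_pow mderivMn mderivM d_ss mderivMn dXXi.
case: b => [|b].
  under eq_bigr => i _ do rewrite expr0 -mpolyC1 mderivC mul0r add0r.
  rewrite sum_cst !mulrn_nc; ncsimp; ring.
under eq_bigr => i _ do rewrite d_pow d_ss.
have E : forall i : 'I_n, (((ss ^+ b * ('X_i *+ 2)) *+ b.+1 * ('X_i *+ 2) +
      ss ^+ b.+1 * (1 *+ 2)) *+ b.+2) =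
     ss ^+ b * ('X_i * 'X_i) * nc (4 * b.+1 * b.+2) + ss ^+ b.+1 * nc (2 * b.+2).
  move=> i; rewrite !mulrn_nc; ncsimp.
  move: (nc b) (ss ^+ b.+1) (ss ^+ b) ('X_i : MP) => c S T X; ring.
under eq_bigr => i _ do rewrite E.
rewrite big_split /= -!mulr_suml -mulr_sumr sXX sum_cst mulrn_nc exprS.
ncsimp; move: (nc b) (nc n) (ss ^+ b) => c m T; ring.
Qed.

Lemma cross (a b : nat) :
  \sum_(i < n) mderiv i (uu ^+ a.+1) * mderiv i (ss ^+ b.+1) =
  uu ^+ a.+1 * ss ^+ b *+ (2 * (a.+1 * b.+1)).
Proof.
under eq_bigr => i _ do rewrite !d_pow d_uu d_ss.
have E : forall i : 'I_n, (uu ^+ a * (y ord0 i)%:MP) *+ a.+1 *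
     ((ss ^+ b * ('X_i *+ 2)) *+ b.+1) =
     (uu ^+ a * ss ^+ b) * ((y ord0 i)%:MP * 'X_i) * nc (2 * (a.+1 * b.+1)).
  move=> i; rewrite !mulrn_nc; ncsimp.
  move: (nc a) (nc b) (uu ^+ a) (ss ^+ b) ((y ord0 i)%:MP) ('X_i : MP) => c d U S Y X; ring.
under eq_bigr => i _ do rewrite E.
rewrite -mulr_suml -mulr_sumr syX mulrn_nc exprS.
move: (nc _) (uu ^+ a) (ss ^+ b) => c U S; ring.
Qed.

Lemma lap_us (a b : nat) : laplacian (uu ^+ a.+2 * ss ^+ b.+1) =
  uu ^+ a * ss ^+ b.+1 * nc (a.+2 * a.+1) +
  uu ^+ a.+2 * ss ^+ b * nc (b.+1 * (4 * b + 2 * n) + 4 * (a.+2 * b.+1)).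
Proof.
rewrite lapM lap_u lap_s cross !mulrn_nc; ncsimp.
rewrite !exprS.
move: (nc a) (nc b) (nc n) (uu ^+ a) (ss ^+ b) uu ss => c d m U S u s; ring.
Qed.
Definition NN : R := n%:R.
Definition e0 : R := (NN + 12) * (NN + 10) * (NN + 8) * (NN + 6).
Definition e1 : R := - 28 * ((NN + 10) * (NN + 8) * (NN + 6)).
Definition e2 : R := 210 * ((NN + 8) * (NN + 6)).
Definition e3 : R := - 420 * (NN + 6).
Definition e4 : R := 105.

Definition Z8 : MP := e0%:MP * uu ^+ 8 + e1%:MP * (uu ^+ 6 * ss ^+ 1)
  + e2%:MP * (uu ^+ 4 * ss ^+ 2) + e3%:MP * (uu ^+ 2 * ss ^+ 3) + e4%:MP * ss ^+ 4.

Definition Z2 : MP := NN%:MP * uu ^+ 2 - ss.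

Lemma lapN (p : MP) : laplacian (- p) = - laplacian p.
Proof. by rewrite /laplacian -sumrN; apply: eq_bigr => i _; rewrite !mderivN. Qed.

Lemma NNnc : NN%:MP = nc n.
Proof. by rewrite /NN mpolyC_nat. Qed.

Lemma harm_Z2 : harmonic Z2.
Proof.
apply/eqP; rewrite /Z2 lapD lapN lapC (lap_u 0) -[ss]expr1 (lap_s 0) NNnc !mulrn_nc.
ncsimp; move: (nc n) => m; ring.
Qed.

Lemma harm_Z8 : harmonic Z8.
Proof.
apply/eqP; rewrite /Z8 !lapD !lapC (lap_u 6) (lap_us 4 0) (lap_us 2 1) (lap_us 0 2) (lap_s 3).
rewrite !mulrn_nc; ncsimp.
rewrite /e0 /e1 /e2 /e3 /e4 /NN /nc.
move: uu ss => u s.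
ring.
Qed.
Lemma homX i : ('X_i : MP) \is 1.-homog.
Proof. by rewrite dhomogX; apply/eqP; apply: mdeg1. Qed.

Lemma homC (c : R) (p : MP) d : p \is d.-homog -> c%:MP * p \is d.-homog.
Proof. by move=> hp; rewrite mul_mpolyC; apply: dhomogZ. Qed.

Lemma hom_uu : uu \is 1.-homog.
Proof. by apply: rpred_sum => i _; apply/homC/homX. Qed.

Lemma hom_ss : ss \is 2.-homog.
Proof. by apply: rpred_sum => i _; apply: (dhomogMn 2 (homX i)). Qed.

Lemma hom_Z8 : Z8 \is 8.-homog.
Proof.
have hu := hom_uu; have hs := hom_ss.
rewrite /Z8; repeat apply: rpredD; apply: homC.
- exact: (dhomogMn 8 hu).
- exact: (dhomogM (dhomogMn 6 hu) (dhomogMn 1 hs)).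
- exact: (dhomogM (dhomogMn 4 hu) (dhomogMn 2 hs)).
- exact: (dhomogM (dhomogMn 2 hu) (dhomogMn 3 hs)).
- exact: (dhomogMn 4 hs).
Qed.

Lemma hom_Z2 : Z2 \is 2.-homog.
Proof.
rewrite /Z2; apply: rpredB; last exact: hom_ss.
by apply: homC; apply: (dhomogMn 2 hom_uu).
Qed.

Definition ip (x : 'rV[R]_n) := \sum_(i < n) y ord0 i * x ord0 i.

Lemma ev_uu x : peval uu x = ip x.
Proof.
rewrite /peval /uu rmorph_sum; apply: eq_bigr => i _.
by rewrite rmorphM /= mevalC mevalXU.
Qed.

Lemma ev_ss x : on_sphere x -> peval ss x = 1.
Proof.
move=> /eqP hx; rewrite /peval /ss rmorph_sum -hx; apply: eq_bigr => i _.
by rewrite rmorphXn /= mevalXU.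
Qed.

Lemma ev_Z8 x : on_sphere x -> peval Z8 x =
  e0 * ip x ^+ 8 + e1 * ip x ^+ 6 + e2 * ip x ^+ 4 + e3 * ip x ^+ 2 + e4.
Proof.
move=> hx; have := ev_ss hx; have := ev_uu x; rewrite /peval /Z8 => hu hs.
by rewrite !(mevalD, mevalM, mevalC, rmorphXn) /= hu hs !expr1n !mulr1.
Qed.

Lemma ev_Z2 x : on_sphere x -> peval Z2 x = NN * ip x ^+ 2 - 1.
Proof.
move=> hx; have := ev_ss hx; have := ev_uu x; rewrite /peval /Z2 => hu hs.
by rewrite !(mevalB, mevalM, mevalC, rmorphXn) /= hu hs.
Qed.

Lemma design_sums (Y : seq 'rV[R]_n) : all (@on_sphere R n) Y ->
  harmonic_index_design (pred2 8%N 2%N) Y ->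
  \sum_(x <- Y) (e0 * ip x ^+ 8 + e1 * ip x ^+ 6 + e2 * ip x ^+ 4 + e3 * ip x ^+ 2 + e4) = 0 /\
  \sum_(x <- Y) (NN * ip x ^+ 2 - 1) = 0.
Proof.
move=> /allP hY hd; split.
  have h8 := hd 8%N Z8 isT hom_Z8 harm_Z8.
  rewrite -[RHS]h8; apply: eq_big_seq => x /hY hx; by rewrite ev_Z8.
have h2 := hd 2%N Z2 isT hom_Z2 harm_Z2.
rewrite -[RHS]h2; apply: eq_big_seq => x /hY hx; by rewrite ev_Z2.
Qed.

Lemma reduce (Y : seq 'rV[R]_n) : all (@on_sphere R n) Y ->
  harmonic_index_design (pred2 8%N 2%N) Y -> y \in Y ->
  \sum_(w <- [seq ip x ^+ 2 | x <- rem y Y])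
     (e0 * w ^+ 4 + e1 * w ^+ 3 + e2 * w ^+ 2 + e3 * w + e4) = - (e0 + e1 + e2 + e3 + e4) /\
  \sum_(w <- [seq ip x ^+ 2 | x <- rem y Y]) (NN * w - 1) = - (NN - 1).
Proof.
move=> hS hD hyY; have [s8 s2] := design_sums hS hD.
have hyy : ip y = 1 by rewrite /ip -hy; apply: eq_bigr => i _; rewrite expr2.
rewrite (big_rem _ hyY) /= hyy in s8; rewrite (big_rem _ hyY) /= hyy in s2.
rewrite !big_map; split.
  under eq_bigr => x _ do rewrite -!exprM.
  move: s8; rewrite !expr1n !mulr1 => s8; lra.
move: s2; rewrite !expr1n !mulr1 => s2; lra.
Qed.
End Zonal.
Section Core.
Variable R : realType.

Lemma psum_seq_eq0 (ws : seq R) (F : R -> R) :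
  (forall w, 0 <= F w) -> \sum_(w <- ws) F w = 0 -> forall w, w \in ws -> F w = 0.
Proof.
move=> hF; elim: ws => [|v ws IH] //= hs w.
rewrite big_cons in hs; move/eqP: hs; rewrite paddr_eq0 // ?sumr_ge0 //.
move=> /andP[/eqP h1 /eqP h2]; rewrite inE => /orP[/eqP -> //|]; exact: IH.
Qed.

Lemma sum_pm (vs : seq R) (d : R) : (forall v, v \in vs -> v ^+ 2 = d) ->
  exists m : int, (\sum_(v <- vs) v) ^+ 2 = (m%:~R) ^+ 2 * d.
Proof.
case: vs => [|v0 vs0] hv; first by exists 0; rewrite big_nil expr0n /= mul0r.
have d0 : 0 <= d by rewrite -(hv v0) ?mem_head // sqr_ge0.
set s := Num.sqrt d.
suff [m hm] : exists m : int, \sum_(v <- v0 :: vs0) v = m%:~R * s.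
  by exists m; rewrite hm exprMn sqr_sqrtr.
elim: (v0 :: vs0) hv => [|v vs IH] hv; first by exists 0; rewrite big_nil mul0r.
have [m hm] : exists m : int, \sum_(v <- vs) v = m%:~R * s.
  by apply: IH => w hw; apply: hv; rewrite inE hw orbT.
have : v ^+ 2 == s ^+ 2 by rewrite sqr_sqrtr // hv ?mem_head.
rewrite eqf_sqr big_cons hm => /orP[/eqP ->|/eqP ->].
  by exists (m + 1); rewrite intrD; ring.
by exists (m - 1); rewrite intrB; ring.
Qed.

Lemma sum_cst_seq (ws : seq R) (c : R) : \sum_(w <- ws) c = c * (size ws)%:R.
Proof.
elim: ws => [|w ws IH]; first by rewrite big_nil mulr0.
by rewrite big_cons IH /= -natr1 mulrDr mulr1 addrC.
Qed.

Lemma tight_core (ws : seq R) (N e0 e1 e2 e3 e4 al be a p : R) :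
  0 < e0 ->
  (forall w, e0 * w ^+ 4 + e1 * w ^+ 3 + e2 * w ^+ 2 + e3 * w + e4 + al * (N * w - 1) + be
     = e0 * (w ^+ 2 - a * w + p) ^+ 2) ->
  \sum_(w <- ws) (e0 * w ^+ 4 + e1 * w ^+ 3 + e2 * w ^+ 2 + e3 * w + e4) = - (e0 + e1 + e2 + e3 + e4) ->
  \sum_(w <- ws) (N * w - 1) = - (N - 1) ->
  - (e0 + e1 + e2 + e3 + e4) - al * (N - 1) + be * (size ws)%:R = 0 ->
  exists m : int, (\sum_(w <- ws) (w - a / 2)) ^+ 2 = (m%:~R) ^+ 2 * (a ^+ 2 / 4 - p).
Proof.
move=> he0 hid hH h2 htot.
have hG : \sum_(w <- ws) e0 * (w ^+ 2 - a * w + p) ^+ 2 = 0.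
  under eq_bigr => w _ do rewrite -hid.
  rewrite big_split /= big_split /= hH -mulr_sumr h2 sum_cst_seq -htot; ring.
have hz : forall w, w \in ws -> e0 * (w ^+ 2 - a * w + p) ^+ 2 = 0.
  apply: (psum_seq_eq0 (F := fun w => e0 * (w ^+ 2 - a * w + p) ^+ 2)) hG => w; apply: mulr_ge0; [exact: ltW | exact: sqr_ge0].
rewrite -(big_map (fun w => w - a / 2) predT id).
apply: sum_pm => v /mapP [w hw ->].
have := hz w hw; move/eqP; rewrite mulf_eq0 (gt_eqF he0) /= sqrf_eq0 => /eqP hq.
have -> : a ^+ 2 / 4 - p = (w - a / 2) ^+ 2 - (w ^+ 2 - a * w + p) by field.
by rewrite hq subr0.
Qed.
End Core.
Lemma nosq (m : int) (c : int) (a : int) : 0 <= a -> a * a < c < (a + 1) * (a + 1) -> m * m <> c.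
Proof.
move=> ha hc hm.
have [hm0|hm0] := lerP 0 m.
- have [h|h] := lerP m a.
  + have : m * m <= a * a by apply: ler_pM.
    lia.
  + have h' : a + 1 <= m by lia.
    have : (a + 1) * (a + 1) <= m * m by apply: ler_pM; lia.
    lia.
- have [h|h] := lerP (- m) a.
  + have : (- m) * (- m) <= a * a by apply: ler_pM; lia.
    rewrite mulrNN; lia.
  + have h' : a + 1 <= - m by lia.
    have : (a + 1) * (a + 1) <= (- m) * (- m) by apply: ler_pM; lia.
    rewrite mulrNN; lia.
Qed.
Module ArithZ.
From Stdlib Require Import ZArith Lia.
Section Arith.
Local Open Scope Z_scope.

Definition Nz (k : Z) := k * (k + 6) * (k + 5) * ((k * k + 15 * k + 8) * (k * k + 15 * k + 8)).
Definition Dz (k : Z) := k * k * k + 27 * k * k + 356 * k - 240.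

Lemma Zbound (k M : Z) : 2 <= k -> M * 168 * Dz k = Nz k -> k <= 7653.
Proof.
move=> hk hE.
have hD : k * k * k < Dz k by rewrite /Dz; nia.
have hD0 : 0 < Dz k by nia.
set c := 169344.
set q := k^4 + 14*k^3 - 133*k^2 + 2638*k - 10584.
set j := q - 168 * M.
set j2 := 4 * c - j * k.
set j3 := 4 * j2 - 134 * j.
set z := 304 * k - 195.
set X := (120 * z - 190320) * j3 - 900 * 304 ^ 2 * j.
have hX : X * Dz k = 2940 * 900 * c.
  have -> : 2940 * 900 * c = X * Dz k + ((120*z - 190320)*(4*k+134) + 900*304^2) * (Nz k - M * 168 * Dz k).
    rewrite /X /j3 /j2 /j /q /z /c /Nz /Dz; ring.
  by rewrite hE Z.sub_diag Z.mul_0_r Z.add_0_r.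
rewrite /c in hX; clearbody X; clear hE.
have hX1 : 0 < X.
  apply/(Z.mul_pos_cancel_r X (Dz k) hD0); rewrite hX; lia.
have hle : Dz k <= 448084224000.
  rewrite -[448084224000]/(2940 * 900 * 169344) -hX; nia.
clear hX; move: (Dz k) hD hle => d; clear -hk; nia.
Qed.

Definition okk (k : Z) : bool :=
  (negb (Z.eqb (Z.modulo (Nz k) (168 * Dz k)) 0) || Z.eqb k 1 || Z.eqb k 2 || Z.eqb k 4 || Z.eqb k 9)%bool.

Fixpoint chk (c : nat) : bool :=
  match c with
  | O => true
  | S c' => okk (Z.of_nat c) && chk c'
  end.

Lemma chkS c : chk c.+1 = okk (Z.of_nat c.+1) && chk c.
Proof. by []. Qed.

Lemma chk_ok : chk 7653 = true.
Proof. vm_compute. reflexivity. Qed.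

Lemma chk_spec c : chk c = true -> forall k : nat, 1 <= Z.of_nat k <= Z.of_nat c ->
  Z.modulo (Nz (Z.of_nat k)) (168 * Dz (Z.of_nat k)) = 0 ->
  Z.of_nat k = 1 \/ Z.of_nat k = 2 \/ Z.of_nat k = 4 \/ Z.of_nat k = 9.
Proof.
elim: c => [|c IH] hc k hk hm; first lia.
rewrite chkS in hc; move/andP: hc => [h1 h2].
have [ek|hne] := (PeanoNat.Nat.eq_dec k c.+1).
  rewrite -ek in h1; move: h1; rewrite /okk hm /=.
  move=> /orP[/orP[/orP[/Z.eqb_eq|/Z.eqb_eq]|/Z.eqb_eq]|/Z.eqb_eq]; tauto.
apply: IH => //; lia.
Qed.

Lemma arith_main (n M : nat) : leq 2 n ->
  muln (muln M 168) (subn (addn (addn (muln (muln n n) n) (muln (muln 27 n) n)) (muln 356 n)) 240) =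
  muln (muln (muln n (addn n 6)) (addn n 5))
    (muln (addn (addn (muln n n) (muln 15 n)) 8) (addn (addn (muln n n) (muln 15 n)) 8)) ->
  (n = 2 /\ M = 2 \/ n = 4 /\ M = 9 \/ n = 9 /\ M = 96)%nat.
Proof.
move=> hn hE.
have hZ : Z.of_nat M * 168 * Dz (Z.of_nat n) = Nz (Z.of_nat n).
  rewrite /Dz /Nz; lia.
have hb := @Zbound (Z.of_nat n) (Z.of_nat M) ltac:(lia) hZ.
have hm : Z.modulo (Nz (Z.of_nat n)) (168 * Dz (Z.of_nat n)) = 0.
  rewrite -hZ -Z.mul_assoc; apply: Z.mod_mul.
  have hk2 : 2 <= Z.of_nat n by lia.
  rewrite /Dz; move: (Z.of_nat n) hk2 => k hk2.
  have h1 : 4 <= k * k by nia.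
  have h3 : 8 <= k * k * k by nia.
  lia.
have hr : 1 <= Z.of_nat n <= Z.of_nat 7653.
  change (Z.of_nat 7653) with 7653; lia.
have := chk_spec chk_ok hr hm.
move=> [h|[h|[h|h]]]; [lia| | |].
- have en : n = 2%nat by lia.
  subst n; rewrite /Dz /Nz /= in hZ; left; split => //; lia.
- have en : n = 4%nat by lia.
  subst n; rewrite /Dz /Nz /= in hZ; right; left; split => //; lia.
- have en : n = 9%nat by lia.
  subst n; rewrite /Dz /Nz /= in hZ; right; right; split => //; lia.
Qed.

End Arith.
End ArithZ.
Section Final.
Variable R : realType.

Lemma final_gen (ws : seq R) (N e0 e1 e2 e3 e4 al be a p : R) :
  0 < e0 -> N != 0 ->
  (forall w, e0 * w ^+ 4 + e1 * w ^+ 3 + e2 * w ^+ 2 + e3 * w + e4 + al * (N * w - 1) + be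
     = e0 * (w ^+ 2 - a * w + p) ^+ 2) ->
  \sum_(w <- ws) (e0 * w ^+ 4 + e1 * w ^+ 3 + e2 * w ^+ 2 + e3 * w + e4) = - (e0 + e1 + e2 + e3 + e4) ->
  \sum_(w <- ws) (N * w - 1) = - (N - 1) ->
  - (e0 + e1 + e2 + e3 + e4) - al * (N - 1) + be * (size ws)%:R = 0 ->
  exists m : int, (((size ws)%:R + 1 - N) / N - (size ws)%:R * (a / 2)) ^+ 2
     = (m%:~R) ^+ 2 * (a ^+ 2 / 4 - p).
Proof.
move=> he0 hN hid hH h2 htot.
have [m hm] := tight_core he0 hid hH h2 htot.
exists m; rewrite -hm; congr (_ ^+ 2).
rewrite big_split /= sumrN sum_cst_seq.
rewrite big_split /= sumrN sum_cst_seq -mulr_sumr in h2.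
set S := \sum_(w <- ws) w in h2 *.
have hS : N * S = (size ws)%:R + 1 - N by lra.
have -> : S = (N * S) / N by field.
by rewrite hS [_ * (a / 2)]mulrC.
Qed.
End Final.
Lemma get_ws (R : realType) (n : nat) (Y : seq 'rV[R]_n) (k : nat) :
  all (@on_sphere R n) Y -> harmonic_index_design (pred2 8%N 2%N) Y -> size Y = k.+1 ->
  exists ws : seq R, size ws = k /\
  \sum_(w <- ws) (e0 R n * w ^+ 4 + e1 R n * w ^+ 3 + e2 R n * w ^+ 2 + e3 R n * w + e4 R)
     = - (e0 R n + e1 R n + e2 R n + e3 R n + e4 R) /\
  \sum_(w <- ws) (NN R n * w - 1) = - (NN R n - 1).
Proof.
move=> hS hD hk.
have [y hyY] : exists y, y \in Y.
  by case: Y hS hD hk => [|y s] // _ _ _; exists y; rewrite mem_head.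
have hy : \sum_(i < n) y ord0 i ^+ 2 = 1 := eqP (allP hS y hyY).
have [s8 s2] := reduce hy hS hD hyY.
exists [seq ip y x ^+ 2 | x <- rem y Y]; split => //.
by rewrite size_map size_rem // hk.
Qed.
Lemma case_n (R : realType) (n : nat) (Y : seq 'rV[R]_n) (k : nat) (al be a p : R) (c : int) (b : int) :
  all (@on_sphere R n) Y -> harmonic_index_design (pred2 8%N 2%N) Y -> size Y = k.+1 ->
  0 < e0 R n -> NN R n != 0 ->
  (forall w, e0 R n * w ^+ 4 + e1 R n * w ^+ 3 + e2 R n * w ^+ 2 + e3 R n * w + e4 R
     + al * (NN R n * w - 1) + be = e0 R n * (w ^+ 2 - a * w + p) ^+ 2) ->
  - (e0 R n + e1 R n + e2 R n + e3 R n + e4 R) - al * (NN R n - 1) + be * k%:R = 0 ->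
  (forall m : int, ((k%:R + 1 - NN R n) / NN R n - k%:R * (a / 2)) ^+ 2
     = (m%:~R) ^+ 2 * (a ^+ 2 / 4 - p) -> m * m = c) ->
  0 <= b -> b * b < c < (b + 1) * (b + 1) -> False.
Proof.
move=> hS hD hk he0 hN hid htot hc hb hbc.
have [ws [hsz [hH h2]]] := get_ws hS hD hk.
have htot' : - (e0 R n + e1 R n + e2 R n + e3 R n + e4 R) - al * (NN R n - 1)
   + be * (size ws)%:R = 0 by rewrite hsz.
have [m hm] := final_gen he0 hN hid hH h2 htot'.
rewrite hsz in hm.
exact: (nosq hb hbc (hc m hm)).
Qed.
Theorem mainTheorem9 (R : realType) (n : nat) (hn : (2 <= n)%N)
  (Y : seq 'rV[R]_n) :
  uniq Y -> all (@on_sphere R n) Y ->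
  harmonic_index_design (pred2 8%N 2%N) Y ->
  (size Y)%:R <>
    (n%:R * (n%:R + 6) * (n%:R + 5) * (n%:R ^+ 2 + 15 * n%:R + 8) ^+ 2)
    / (168 * (n%:R ^+ 3 + 27 * n%:R ^+ 2 + 356 * n%:R - 240)) :> R.
Proof.
move=> _ hS hD hsz.
have hn2 : (2%:R : R) <= n%:R by rewrite ler_nat.
have hDr : 0 < (n%:R ^+ 3 + 27 * n%:R ^+ 2 + 356 * n%:R - 240 : R).
  rewrite !exprS expr0 !mulr1; nra.
have h240 : (240 <= n * n * n + 27 * n * n + 356 * n)%N by nia.
have hnat : ((size Y) * 168 * (n * n * n + 27 * n * n + 356 * n - 240) =
   n * (n + 6) * (n + 5) * ((n * n + 15 * n + 8) * (n * n + 15 * n + 8)))%N.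
  apply/eqP; rewrite -(eqr_nat R); apply/eqP.
  rewrite natrM natrM (natrB _ h240).
  have -> : ((n * n * n + 27 * n * n + 356 * n)%:R : R) = n%:R ^+ 3 + 27 * n%:R ^+ 2 + 356 * n%:R.
    by ring.
  have -> : ((n * (n + 6) * (n + 5) * ((n * n + 15 * n + 8) * (n * n + 15 * n + 8)))%:R : R) =
     n%:R * (n%:R + 6) * (n%:R + 5) * (n%:R ^+ 2 + 15 * n%:R + 8) ^+ 2 by ring.
  rewrite hsz; field; lra.
have := ArithZ.arith_main hn hnat.
move=> [[en eM]|[[en eM]|[en eM]]]; subst n.
- apply: (@case_n R 2 Y 1 0 105 1 (1/8) (1 * 1 + 1) 1 hS hD eM).
  + by rewrite /e0 /NN; lra.
  + by rewrite /NN pnatr_eq0.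
  + by move=> w; rewrite /e0 /e1 /e2 /e3 /e4 /NN; field.
  + by rewrite /e0 /e1 /e2 /e3 /e4 /NN; field.
  + move=> m hm; apply/eqP; rewrite -(eqr_int R) intrM; apply/eqP.
    rewrite intrD !intrM.
    move: hm; rewrite /NN; set t := (m%:~R : R); rewrite expr2 => hm; lra.
  + by [].
  + apply/andP; split; lia.
- apply: (@case_n R 4 Y 8 (315/8) (8505/64) (7/8) (11/128) (6 * 6 + 12) 6 hS hD eM).
  + by rewrite /e0 /NN; lra.
  + by rewrite /NN pnatr_eq0.
  + by move=> w; rewrite /e0 /e1 /e2 /e3 /e4 /NN; field.
  + by rewrite /e0 /e1 /e2 /e3 /e4 /NN; field.
  + move=> m hm; apply/eqP; rewrite -(eqr_int R) intrM; apply/eqP.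
    rewrite intrD !intrM.
    move: hm; rewrite /NN; set t := (m%:~R : R); rewrite expr2 => hm; lra.
  + by [].
  + apply/andP; split; lia.
- apply: (@case_n R 9 Y 95 (2240/27) (280 * 272 / 513) (2/3) (7/171) (83 * 83 + 8) 83 hS hD eM).
  + by rewrite /e0 /NN; lra.
  + by rewrite /NN pnatr_eq0.
  + by move=> w; rewrite /e0 /e1 /e2 /e3 /e4 /NN; field.
  + by rewrite /e0 /e1 /e2 /e3 /e4 /NN; field.
  + move=> m hm; apply/eqP; rewrite -(eqr_int R) intrM; apply/eqP.
    rewrite intrD !intrM.
    move: hm; rewrite /NN; set t := (m%:~R : R); rewrite expr2 => hm; lra.
  + by [].
  + apply/andP; split; lia.
Qed.
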